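(* Let $J$ be a finite set, and let $Y$ and $X_j$ ($j\in J$) be Banach lattices on a measure space $(\Omega,\Sigma,\mu)$. Then for every $\theta\in(0,1)$, \[\bigoplus_{j\in J}\big(X_j^{1-\theta}Y^\theta\big)=\Big(\bigoplus_{j\in J}X_j\Big)^{1-\theta}Y^\theta\] as sets, and both inclusion maps $\bigoplus_{j\in J}(X_j^{1-\theta}Y^\theta)\hookrightarrow(\bigoplus_{j\in J}X_j)^{1-\theta}Y^\theta$ and $(\bigoplus_{j\in J}X_j)^{1-\theta}Y^\theta\hookrightarrow\bigoplus_{j\in J}(X_j^{1-\theta}Y^\theta)$ have norm at most $\operatorname{card}J$.
   Context: For a finite family of Banach spaces $Z_j$ contained in a common linear space, $\bigoplus_{j\in J}Z_j$ denotes $\bigcap_j Z_j$ with the norm $\|x\|=\sum_{j\in J}\|x\|_{Z_j}$. For Banach lattices $X_0,X_1$ on $(\Omega,\Sigma,\mu)$ and $\theta\in(0,1)$, the Calderón product $X_0^{1-\theta}X_1^\theta$ is the space of measurable $x$ such that $|x|\le\lambda|x_0|^{1-\theta}|x_1|^\theta$ $\mu$-a.e. for some $\lambda>0$ and some $x_i\in X_i$ with $\|x_i\|_{X_i}\le1$; its norm is the infimum of such $\lambda$. *)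

(* Defs.v *)
From HB Require Import structures.
From mathcomp Require Import all_boot all_order all_algebra.
From mathcomp Require Import all_classical all_reals all_analysis.
Set Implicit Arguments. Unset Strict Implicit. Unset Printing Implicit Defensive.
Import Order.TTheory GRing.Theory Num.Theory.
Local Open Scope classical_set_scope.
Local Open Scope ring_scope.

Section Defs.
Context {d : measure_display} {T : measurableType d} {R : realType}.
Variable mu : {measure set T -> \bar R}.

Definition banach_lattice (M : set (T -> R)) (N : (T -> R) -> R) : Prop :=
  [/\ (forall x : T -> R, M x -> measurable_fun setT x),
      M (fun _ => 0),
      (forall x y : T -> R, measurable_fun setT x -> M y ->
         {ae mu, forall t, `|x t| <= `|y t|} -> M x /\ N x <= N y),
      (forall x y : T -> R, M x -> M y -> M (x \+ y) /\ N (x \+ y) <= N x + N y) &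
     [/\ (forall (c : R) (x : T -> R), M x -> M (fun t => c * x t) /\
                           N (fun t => c * x t) = `|c| * N x),
      (forall x : T -> R, M x -> 0 <= N x /\ (N x = 0 <-> {ae mu, forall t, x t = 0})) &
      (forall u : nat -> T -> R, (forall n, M (u n)) ->
         (forall e : R, 0 < e -> exists n0 : nat, forall n m : nat,
             (n0 <= n)%N -> (n0 <= m)%N -> N (u n \- u m) < e) ->
         exists x : T -> R, M x /\ (forall e : R, 0 < e -> exists n0 : nat,
             forall n : nat, (n0 <= n)%N -> N (u n \- x) < e))]].

(* finite direct sum: intersection with sum of norms *)
Definition dsum_mem (J : finType) (M : J -> set (T -> R)) : set (T -> R) :=
  fun x => forall j, M j x.
Definition dsum_norm (J : finType) (N : J -> (T -> R) -> R) (x : T -> R) : R :=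
  \sum_(j : J) N j x.

Definition cald_witness (M0 : set (T -> R)) (N0 : (T -> R) -> R)
  (M1 : set (T -> R)) (N1 : (T -> R) -> R) (th : R) (x : T -> R) (l : R) : Prop :=
  0 < l /\ exists x0 x1 : T -> R, [/\ M0 x0, N0 x0 <= 1, M1 x1, N1 x1 <= 1 &
     {ae mu, forall t, `|x t| <= l * (`|x0 t| `^ (1 - th)) * (`|x1 t| `^ th)}].

Definition cald_mem M0 N0 M1 N1 th : set (T -> R) :=
  fun x : T -> R => measurable_fun setT x /\ exists l : R, cald_witness M0 N0 M1 N1 th x l.

Definition cald_norm M0 N0 M1 N1 th (x : T -> R) : R :=
  inf [set l | cald_witness M0 N0 M1 N1 th x l].

End Defs.

(* Main.v *)
Require Import Defs.
From HB Require Import structures.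
From mathcomp Require Import all_boot all_order all_algebra.
From mathcomp Require Import all_classical all_reals all_analysis.
From mathcomp Require Import ring lra measurable_realfun.
Import Order.TTheory GRing.Theory Num.Theory.
Local Open Scope classical_set_scope.
Local Open Scope ring_scope.

Section Helpers.
Context {d : measure_display} {T : measurableType d} {R : realType}.
Variable mu : {measure set T -> \bar R}.

Lemma powR_split (c p q : R) : 0 <= c -> p + q = 1 -> c `^ p * c `^ q = c.
Proof.
move=> c0 pq; rewrite -powRD; first by rewrite pq powRr1.
by rewrite pq oner_eq0.
Qed.

Lemma scale_witness (M0 : set (T -> R)) (N0 : (T -> R) -> R)
  (M1 : set (T -> R)) (N1 : (T -> R) -> R) (th : R) (x x0 x1 : T -> R) (l c : R) :
  (forall (c : R) (x : T -> R), M0 x -> M0 (fun t => c * x t) /\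
                           N0 (fun t => c * x t) = `|c| * N0 x) ->
  (forall (c : R) (x : T -> R), M1 x -> M1 (fun t => c * x t) /\
                           N1 (fun t => c * x t) = `|c| * N1 x) ->
  0 < l -> 0 < c -> M0 x0 -> N0 x0 <= c -> M1 x1 -> N1 x1 <= c ->
  {ae mu, forall t, `|x t| <= l * (`|x0 t| `^ (1 - th)) * (`|x1 t| `^ th)} ->
  cald_witness mu M0 N0 M1 N1 th x (l * c).
Proof.
move=> hom0 hom1 l0 c0 Mx0 Nx0 Mx1 Nx1 hae.
split; first exact: mulr_gt0.
have ci0 : 0 <= c^-1 by rewrite invr_ge0 ltW.
have [Ma Na] := hom0 c^-1 _ Mx0.
have [Mb Nb] := hom1 c^-1 _ Mx1.
exists (fun t => c^-1 * x0 t), (fun t => c^-1 * x1 t); split => //.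
- by rewrite Na ger0_norm // ler_pdivrMl // mulr1.
- by rewrite Nb ger0_norm // ler_pdivrMl // mulr1.
apply: filterS hae => t ht; apply: (le_trans ht).
have e0 : `|x0 t| = c * `|c^-1 * x0 t|.
  by rewrite normrM ger0_norm // mulrA divff ?mul1r // gt_eqF.
have e1 : `|x1 t| = c * `|c^-1 * x1 t|.
  by rewrite normrM ger0_norm // mulrA divff ?mul1r // gt_eqF.
rewrite [in X in X <= _]e0 [in X in X <= _]e1 !powRM ?normr_ge0 ?(ltW c0) //.
have cc := @powR_split c (1 - th) th (ltW c0) (subrK _ _).
rewrite le_eqVlt; apply/orP; left; apply/eqP; transitivity (l * (c `^ (1 - th) * c `^ th) * `|c^-1 * x0 t| `^ (1 - th) * `|c^-1 * x1 t| `^ th); first ring.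
by rewrite cc.
Qed.


Lemma bl_hom {M N} : banach_lattice mu M N ->
  forall (c : R) (x : T -> R), M x -> M (fun t => c * x t) /\
                           N (fun t => c * x t) = `|c| * N x.
Proof. by case=> _ _ _ _ [h _ _]. Qed.

Lemma bl_meas {M N} : banach_lattice mu M N -> forall x, M x -> measurable_fun setT x.
Proof. by case. Qed.

Lemma bl_ge0 {M N} : banach_lattice mu M N -> forall x, M x -> 0 <= N x.
Proof. by case=> _ _ _ _ [_ h _] x Mx; case: (h x Mx). Qed.

Lemma bl_ideal {M N} : banach_lattice mu M N -> forall x y : T -> R,
  measurable_fun setT x -> M y ->
  {ae mu, forall t, `|x t| <= `|y t|} -> M x /\ N x <= N y.
Proof. by case. Qed.

Lemma bl_add {M N} : banach_lattice mu M N -> forall x y : T -> R,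
  M x -> M y -> M (x \+ y) /\ N (x \+ y) <= N x + N y.
Proof. by case. Qed.

Lemma dsum_hom (J : finType) (X : J -> set (T -> R)) NX :
  (forall j, banach_lattice mu (X j) (NX j)) ->
  forall (c : R) (x : T -> R), dsum_mem X x -> dsum_mem X (fun t => c * x t) /\
                           dsum_norm NX (fun t => c * x t) = `|c| * dsum_norm NX x.
Proof.
move=> hX c x Mx; split.
  by move=> j; exact: (bl_hom (hX j) c x (Mx j)).1.
rewrite /dsum_norm mulr_sumr; apply: eq_bigr => j _.
exact: (bl_hom (hX j) c x (Mx j)).2.
Qed.

Lemma ler_sum_one (J : finType) (F : J -> R) j : (forall i, 0 <= F i) ->
  F j <= \sum_(i : J) F i.
Proof. by move=> F0; rewrite (bigD1 j) //= lerDl sumr_ge0. Qed.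

Definition minf {J : Type} (f : J -> T -> R) (j0 : J) (s : seq J) (t : T) : R :=
  foldr (fun j acc => Order.min `|f j t| acc) `|f j0 t| s.

Lemma minf_meas (J : Type) (f : J -> T -> R) j0 s :
  (forall j, measurable_fun setT (f j)) -> measurable_fun setT (minf f j0 s).
Proof.
move=> mf; elim: s => [|j s IH] /=.
  exact: (measurableT_comp (@measurable_realfun.normr_measurable R setT) (mf j0)).
apply: measurable_minr => //.
exact: (measurableT_comp (@measurable_realfun.normr_measurable R setT) (mf j)).
Qed.

Lemma minf_ge0 (J : Type) (f : J -> T -> R) j0 s t : 0 <= minf f j0 s t.
Proof.
elim: s => [|j s IH] /=; first by [].
by rewrite le_min normr_ge0 IH.
Qed.

Lemma minf_le (J : eqType) (f : J -> T -> R) j0 s t j : j \in j0 :: s ->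
  minf f j0 s t <= `|f j t|.
Proof.
elim: s j => [|i s IH] j /=.
  by rewrite inE => /eqP ->.
rewrite !inE => /orP[/eqP ->|/orP[/eqP ->|js]].
- by rewrite ge_min; apply/orP; right; apply: IH; rewrite mem_head.
- by rewrite ge_min lexx.
- by rewrite ge_min; apply/orP; right; apply: IH; rewrite inE js orbT.
Qed.

Lemma minf_att (J : Type) (f : J -> T -> R) j0 s t :
  exists k, minf f j0 s t = `|f k t|.
Proof.
elim: s => [|j s [k IH]] /=; first by exists j0.
rewrite IH; case: (leP `|f j t| `|f k t|) => _; [by exists j| by exists k].
Qed.

Lemma sumY (J : Type) (Y : set (T -> R)) NY (f : J -> T -> R) (s : seq J) :
  banach_lattice mu Y NY -> (forall j, Y (f j)) ->
  Y (fun t => \sum_(j <- s) `|f j t|) /\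
  NY (fun t => \sum_(j <- s) `|f j t|) <= \sum_(j <- s) NY (f j).
Proof.
move=> hY Yf; elim: s => [|j s [IH1 IH2]].
  have [h1 h2] := bl_hom hY 0 (fun _ => 0) (match hY with And5 _ h _ _ _ => h end).
  have E : (fun t : T => \sum_(j <- [::]) `|f j t|) = (fun t => 0 * (fun _ => 0) t).
    by apply/funext => t; rewrite big_nil mul0r.
  by rewrite E big_nil; split => //; rewrite h2 normr0 mul0r.
have E : (fun t : T => \sum_(i <- j :: s) `|f i t|) =
   (fun t => `|f j t|) \+ (fun t => \sum_(i <- s) `|f i t|).
  by apply/funext => t; rewrite big_cons.
have mfj := bl_meas hY _ (Yf j).
have ae1 : {ae mu, forall t, `|(Num.Def.normr \o f j) t| <= `|f j t|}.
  by apply: aeW => t /=; rewrite normr_id.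
have [Aj NAj] := bl_ideal hY _ _ (measurableT_comp (@measurable_realfun.normr_measurable R setT) mfj) (Yf j) ae1.
have [S1 S2] := bl_add hY _ _ Aj IH1.
rewrite E big_cons; split => //.
by apply: (le_trans S2); apply: lerD.
Qed.


Lemma cald_sub (J : finType) (X : J -> set (T -> R)) NX Y NY th
  (hX : forall j, banach_lattice mu (X j) (NX j)) (hY : banach_lattice mu Y NY)
  (th0 : 0 < th) (th1 : th < 1) (x : T -> R) (j0 : J)
  (l : J -> R) (x0 x1 : J -> T -> R) :
  (forall j, 0 < l j) -> (forall j, X j (x0 j)) -> (forall j, NX j (x0 j) <= 1) ->
  (forall j, Y (x1 j)) -> (forall j, NY (x1 j) <= 1) ->
  (forall j, {ae mu, forall t, `|x t| <= l j * (`|x0 j t| `^ (1 - th)) * (`|x1 j t| `^ th)}) ->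
  cald_witness mu (dsum_mem X) (dsum_norm NX) Y NY th x ((\sum_(j : J) l j) * #|J|%:R).
Proof.
move=> l0 Xx0 Nx0 Yx1 Nx1 hae.
pose u := minf x0 j0 (index_enum J).
pose v := fun t => \sum_(j <- index_enum J) `|x1 j t|.
have mx0 j : measurable_fun setT (x0 j) := bl_meas (hX j) _ (Xx0 j).
have mu_ : measurable_fun setT u by apply: minf_meas.
have u0 t : 0 <= u t by apply: minf_ge0.
have uX j : X j u /\ NX j u <= NX j (x0 j).
  apply: (bl_ideal (hX j) _ _ mu_ (Xx0 j)); apply: aeW => t.
  rewrite ger0_norm //; apply: minf_le.
  by rewrite inE mem_index_enum orbT.
have [vY vN] := @sumY J Y NY x1 (index_enum J) hY Yx1.
have cJ : (0 < #|J|)%N by apply/card_gt0P; exists j0.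
apply: scale_witness.
- exact: dsum_hom.
- exact: bl_hom.
- by apply: (lt_le_trans (l0 j0)); apply: ler_sum_one => i; apply: ltW.
- by rewrite ltr0n.
- by move=> j; exact: (uX j).1.
- rewrite /dsum_norm; apply: (@le_trans _ _ (\sum_(j : J) (1 : R))).
    by apply: ler_sum => j _; apply: (le_trans (uX j).2).
  by rewrite sumr_const.
- exact: vY.
- apply: (le_trans vN); apply: (@le_trans _ _ (\sum_(j : J) (1 : R))).
    by apply: ler_sum => j _.
  by rewrite sumr_const.
have hall := filter_forall (ae_filter_ringOfSetsType mu) hae.
apply: filterS hall => t ht.
have [k hk] := @minf_att J x0 j0 (index_enum J) t.
apply: (le_trans (ht k)).
have p0 : 0 <= 1 - th by rewrite subr_ge0 ltW.
have e1 : `|x0 k t| `^ (1 - th) = `|u t| `^ (1 - th).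
  by rewrite [`|u t|]ger0_norm // /u hk.
have e2 : `|x1 k t| `^ th <= `|v t| `^ th.
  apply: ge0_ler_powR; rewrite ?nnegrE ?normr_ge0 ?(ltW th0) //.
  rewrite [X in _ <= X]ger0_norm; last by apply: sumr_ge0 => i _.
  by apply: (@ler_sum_one J (fun i => `|x1 i t|)) => i.
rewrite e1.
have A : 0 <= l k * `|u t| `^ (1 - th) by rewrite mulr_ge0 ?powR_ge0 ?(ltW (l0 k)).
apply: (ler_pM A (powR_ge0 _ _) _ e2).
apply: (ler_pM (ltW (l0 k)) (powR_ge0 _ _) _ (lexx _)).
by apply: ler_sum_one => i; apply: ltW.
Qed.

End Helpers.

Theorem lemma4p9 (d : measure_display) (T : measurableType d) (R : realType)
  (mu : {measure set T -> \bar R}) (J : finType)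
  (X : J -> set (T -> R)) (NX : J -> (T -> R) -> R)
  (Y : set (T -> R)) (NY : (T -> R) -> R)
  (hX : forall j, banach_lattice mu (X j) (NX j))
  (hY : banach_lattice mu Y NY)
  (hJ : (0 < #|J|)%N)
  (theta : R) (h0 : 0 < theta) (h1 : theta < 1) :
  [/\ dsum_mem (fun j => cald_mem mu (X j) (NX j) Y NY theta)
        = cald_mem mu (dsum_mem X) (dsum_norm NX) Y NY theta,
      (forall x, dsum_mem (fun j => cald_mem mu (X j) (NX j) Y NY theta) x ->
         cald_norm mu (dsum_mem X) (dsum_norm NX) Y NY theta x
           <= #|J|%:R * dsum_norm (fun j => cald_norm mu (X j) (NX j) Y NY theta) x) &
      (forall x, cald_mem mu (dsum_mem X) (dsum_norm NX) Y NY theta x ->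
         dsum_norm (fun j => cald_norm mu (X j) (NX j) Y NY theta) x
           <= #|J|%:R * cald_norm mu (dsum_mem X) (dsum_norm NX) Y NY theta x)].
Proof.
set n := #|J|%:R.
have n0 : 0 < n by rewrite ltr0n.
case/card_gt0P: (hJ) => j0 _.
have hlb : forall M0 N0 M1 N1 (x : T -> R),
    has_lbound (cald_witness mu M0 N0 M1 N1 theta x).
  by move=> M0 N0 M1 N1 x; exists 0 => y [y0 _]; apply: ltW.
have key : forall x, dsum_mem (fun j => cald_mem mu (X j) (NX j) Y NY theta) x ->
    forall e, 0 < e -> exists L,
    cald_witness mu (dsum_mem X) (dsum_norm NX) Y NY theta x L /\
    L <= n * (dsum_norm (fun j => cald_norm mu (X j) (NX j) Y NY theta) x + n * e).
  move=> x hx e e0.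
  have : forall j, exists p : R * ((T -> R) * (T -> R)),
      (0 < p.1 /\ [/\ X j p.2.1, NX j p.2.1 <= 1, Y p.2.2, NY p.2.2 <= 1 &
       {ae mu, forall t, `|x t| <= p.1 * (`|p.2.1 t| `^ (1 - theta)) * (`|p.2.2 t| `^ theta)}])
      /\ p.1 < cald_norm mu (X j) (NX j) Y NY theta x + e.
    move=> j; have [_ [l0 hl0]] := hx j.
    have hinf : has_inf (cald_witness mu (X j) (NX j) Y NY theta x).
      by split; [exists l0 | exact: hlb].
    have [l [lpos [a [b H]]] lt] := inf_adherent e0 hinf.
    by exists (l, (a, b)).
  case/boolp.choice => f hf.
  exists ((\sum_(j : J) (f j).1) * n); split.
    apply: (@cald_sub _ _ _ mu J X NX Y NY theta hX hY h0 h1 x j0 (fun j => (f j).1)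
              (fun j => (f j).2.1) (fun j => (f j).2.2)) => j;
      by case: (hf j) => -[? [? ? ? ? ?]] _.
  rewrite mulrC; apply: ler_wpM2l; first exact: ltW.
  apply: (@le_trans _ _ (\sum_(j : J) (cald_norm mu (X j) (NX j) Y NY theta x + e))).
    by apply: ler_sum => j _; apply: ltW; case: (hf j).
  by rewrite big_split /= sumr_const /dsum_norm mulr_natl.
split.
- apply/funext => x; apply/propext; split.
    move=> hx; split; first exact: (hx j0).1.
    by have [L [HL _]] := key x hx 1 ltr01; exists L.
  move=> [mx [l [l0 [a [b [Xa Na Yb Nb ae]]]]]] j; split => //.
  exists l; split => //; exists a, b; split => //.
  apply: le_trans Na; rewrite /dsum_norm.
  by apply: (@ler_sum_one _ J (fun i => NX i a)) => i; exact: (bl_ge0 mu (hX i) _ (Xa i)).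
- move=> x hx; apply/ler_addgt0Pr => e e0.
  have e'0 : 0 < e / (n * n) by rewrite divr_gt0 ?mulr_gt0.
  have [L [HL Lle]] := key x hx _ e'0.
  apply: le_trans (ge_inf (hlb _ _ _ _ x) HL) _.
  apply: (le_trans Lle); rewrite le_eqVlt; apply/orP; left; apply/eqP.
  by field; rewrite gt_eqF.
- move=> x [mx [l0 hl0]].
  rewrite -ler_pdivrMl //; apply: lb_le_inf; first by exists l0.
  move=> l [lpos [a [b [Xa Na Yb Nb ae]]]].
  rewrite ler_pdivrMl // /dsum_norm.
  apply: (@le_trans _ _ (\sum_(j : J) l)); last by rewrite sumr_const mulr_natl.
  apply: ler_sum => j _; rewrite /cald_norm; apply: (ge_inf (hlb (X j) (NX j) Y NY x)).
  split => //; exists a, b; split => //.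
  apply: le_trans Na; rewrite /dsum_norm.
  by apply: (@ler_sum_one _ J (fun i => NX i a)) => i; exact: (bl_ge0 mu (hX i) _ (Xa i)).
Qed.
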